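(* Let $1\le p<q$ and $u=0^{q-p}1^p$. Then $$\mathcal{S}_{q-p}(u)=\sum_{j=1}^{q}\min(j-1,\;p,\;q-p,\;q+1-j)\,2^{q-j}.$$
   Context: For a word $x=x_1\cdots x_n$ over $\{0,1\}$, $(x)_2=\sum_{i=1}^n x_i2^{n-i}$. For $w\in\{0,1\}^q$, $\mathcal{O}_1(w)\le\dots\le\mathcal{O}_q(w)$ are the $q$ cyclic shifts $w,\sigma(w),\dots,\sigma^{q-1}(w)$ (where $\sigma(w_1\cdots w_n)=w_2\cdots w_nw_1$) sorted lexicographically with $0<1$, $\mathcal{I}_k(w)=(\mathcal{O}_k(w))_2$, and $\mathcal{S}_i(w)=\sum_{k=1}^i\mathcal{I}_k(w)$. *)

(* Defs.v *)
From mathcomp Require Import all_boot.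
Set Implicit Arguments. Unset Strict Implicit. Unset Printing Implicit Defensive.

(* Binary words are sequences of booleans (false = 0, true = 1). *)

Definition val2 (x : seq bool) : nat :=
  \sum_(i < size x) nth false x i * 2 ^ (size x - i.+1).

Fixpoint lexle (x y : seq bool) : bool :=
  match x, y with
  | [::], _ => true
  | _ :: _, [::] => false
  | a :: x', b :: y' => (a < b) || ((a == b) && lexle x' y')
  end.

(* sigma(w_1...w_n) = w_2...w_n w_1, i.e. rot 1; sigma^i = rot i *)
Definition shifts (w : seq bool) : seq (seq bool) :=
  [seq rot i w | i <- iota 0 (size w)].

Definition sortedShifts (w : seq bool) : seq (seq bool) := sort lexle (shifts w).

(* O_k(w), 1-indexed *)
Definition O_ (k : nat) (w : seq bool) : seq bool := nth [::] (sortedShifts w) k.-1.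

Definition I_ (k : nat) (w : seq bool) : nat := val2 (O_ k w).

Definition S_ (i : nat) (w : seq bool) : nat := \sum_(1 <= k < i.+1) I_ k w.

(* Main.v *)
Require Import Defs.
From mathcomp Require Import all_boot zify.

Lemma lexle_refl : reflexive lexle.
Proof. by elim=> //= a x ->; rewrite eqxx orbT. Qed.

Lemma lexle_trans : transitive lexle.
Proof.
move=> y x; elim: x y => [|a x IH] [|b y] [|c z] //=.
by case: a; case: b; case: c => //=; apply: IH.
Qed.

Lemma lexle_anti : antisymmetric lexle.
Proof.
elim=> [|a x IH] [|b y] //= /andP[].
by case: a; case: b => //= H1 H2; rewrite (IH y) // H1 H2.
Qed.

Lemma lexle_total : total lexle.
Proof.
elim=> [|a x IH] [|b y] //=.
by case: a; case: b => //=; apply: IH.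
Qed.

Lemma lexle_cat s x y : lexle (s ++ x) (s ++ y) = lexle x y.
Proof. by elim: s => //= a s ->; rewrite ltnn eqxx. Qed.

Lemma val2_cons b x : val2 (b :: x) = b * 2 ^ size x + val2 x.
Proof. by rewrite /val2 big_ord_recl /= subn1. Qed.

Lemma val2_cat x y : val2 (x ++ y) = val2 x * 2 ^ size y + val2 y.
Proof.
elim: x => [|b x IH]; first by rewrite /val2 big_ord0.
by rewrite cat_cons !val2_cons IH size_cat expnD; lia.
Qed.

Lemma val2_zeros k y : val2 (nseq k false ++ y) = val2 y.
Proof. by elim: k => //= k IH; rewrite val2_cons IH. Qed.

Lemma val2_ones p : (val2 (nseq p true)).+1 = 2 ^ p.
Proof. elim: p => [|p IH]; first by rewrite /val2 big_ord0.
by rewrite /= val2_cons size_nseq expnS; lia. Qed.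

Lemma geo_ind N K : \sum_(s < N) (s < K) * 2 ^ s = 2 ^ (minn N K) - 1.
Proof.
elim: N => [|N IH]; first by rewrite big_ord0 min0n.
rewrite big_ord_recr /= IH; have h1 : 0 < 2 ^ N by rewrite expn_gt0.
have h2 : 0 < 2 ^ K by rewrite expn_gt0.
case: (ltnP N K) => h.
  have -> : minn N.+1 K = N.+1 by lia.
  rewrite expnS; lia.
have -> : minn N.+1 K = K by lia.
lia.
Qed.

Definition cc p m s := minn (minn (p + m - 1 - s) p) (minn m s.+1).

Lemma rhs_closed p m : \sum_(s < p + m) cc p m s * 2 ^ s = (2 ^ p - 1) * (2 ^ m - 1).
Proof.
elim: m => [|m IH].
  by rewrite expn0 subnn muln0 big1 // => i _; rewrite /cc min0n minn0.
have E : forall s, cc p m.+1 s * 2 ^ s + (s < m) * 2 ^ s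
   = cc p m s * 2 ^ s + (s < p + m) * 2 ^ s.
  move=> s; rewrite -!mulnDl; congr (_ * _); rewrite /cc.
  case: (ltnP s m) => h1; case: (ltnP s (p + m)) => h2 /=; lia.
have H : \sum_(s < (p + m).+1) (cc p m.+1 s * 2 ^ s + (s < m) * 2 ^ s)
   = \sum_(s < (p + m).+1) (cc p m s * 2 ^ s + (s < p + m) * 2 ^ s).
  by apply: eq_bigr => s _; apply: E.
rewrite !big_split /= in H.
rewrite geo_ind geo_ind [X in _ = X + _]big_ord_recr /= IH in H.
rewrite addnS.
have E0 : cc p m (p + m) = 0 by rewrite /cc; lia.
move: H; rewrite E0 mul0n addn0.
have -> : minn (p + m).+1 m = m by lia.
have -> : minn (p + m).+1 (p + m) = p + m by lia.
rewrite expnS expnD. have h1 : 0 < 2 ^ p by rewrite expn_gt0.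
have h2 : 0 < 2 ^ m by rewrite expn_gt0.
move: (\sum_(i < _) _) (2 ^ p) (2 ^ m) h1 h2 => S [|a] [|b] // _ _; rewrite !subn1 /=.
rewrite !mulnS !mulSn; lia.
Qed.

Lemma rotA m p i : i < m ->
  rot i (nseq m false ++ nseq p true) = nseq (m - i) false ++ nseq p true ++ nseq i false.
Proof.
move=> h; rewrite /rot drop_cat take_cat size_nseq h drop_nseq take_nseq ?(ltnW h) //.
by rewrite catA.
Qed.

Lemma rotB m p i : m <= i < m + p -> head false (rot i (nseq m false ++ nseq p true)) = true.
Proof.
move=> /andP[h1 h2]; rewrite /rot drop_cat size_nseq ltnNge h1 /= drop_nseq.
by have -> : p - (i - m) = (p - (i - m)).-1.+1 by lia.
Qed.

Lemma lex_ft x y : head false x = false -> head false y = true -> lexle x y.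
Proof. by case: x => [|a x] //; case: y => [|b y] //= -> ->. Qed.

Lemma sorted_cat_gen (s1 s2 : seq (seq bool)) : sorted lexle s1 -> sorted lexle s2 ->
  (forall x y, x \in s1 -> y \in s2 -> lexle x y) -> sorted lexle (s1 ++ s2).
Proof.
case: s1 => [|a s1] //= H1 H2 H; rewrite cat_path H1 /=.
case: s2 H2 H => [|b s2] //= -> H; rewrite andbT; apply: H; last exact: mem_head.
exact: mem_last.
Qed.

Lemma S_closed p m : 0 < p -> 0 < m ->
  S_ m (nseq m false ++ nseq p true) = (2 ^ p - 1) * (2 ^ m - 1).
Proof.
move=> hp hm; set w := nseq m false ++ nseq p true.
set A := [seq rot i w | i <- iota 0 m].
set B := [seq rot i w | i <- iota m p].
have EA : shifts w = A ++ B by rewrite /shifts size_cat !size_nseq iotaD map_cat.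
have sA : sorted lexle A.
  apply/(sortedP [::]) => i; rewrite size_map size_iota => hi.
  rewrite !(nth_map 0) ?size_iota ?(ltnW hi) // !nth_iota ?(ltnW hi) // !add0n.
  rewrite !rotA ?(ltnW hi) //.
  have -> : m - i = (m - i.+1) + 1 by lia.
  rewrite nseqD -catA lexle_cat.
  by case: p hp {w A B EA} => // p' _.
have sL : sorted lexle (A ++ sort lexle B).
  apply: sorted_cat_gen; [exact: sA | exact: (sort_sorted lexle_total) |].
  move=> x y /mapP[i]; rewrite mem_iota add0n => /andP[_ hi] ->.
  rewrite mem_sort => /mapP[j]; rewrite mem_iota => hj ->.
  apply: lex_ft; last exact: rotB.
  by rewrite rotA //; have -> : m - i = (m - i).-1.+1 by lia.
have EL : sortedShifts w = A ++ sort lexle B.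
  rewrite /sortedShifts; apply: (sorted_eq lexle_trans lexle_anti); first exact: (sort_sorted lexle_total).
    exact: sL.
  by rewrite EA perm_sort perm_cat2l perm_sym perm_sort.
rewrite /S_ big_add1 /= big_mkord.
have G : \sum_(i < m) 2 ^ i = 2 ^ m - 1.
  have -> : 2 ^ m - 1 = 2 ^ (minn m m) - 1 by rewrite minnn.
  by rewrite -geo_ind; apply: eq_bigr => i _; rewrite ltn_ord mul1n.
rewrite -G big_distrr /=; apply: eq_bigr => i _.
rewrite /I_ /O_ EL /= nth_cat size_map size_iota ltn_ord (nth_map 0) ?size_iota //.
rewrite nth_iota // add0n rotA // val2_zeros val2_cat size_nseq.
have -> : val2 (nseq i false) = 0 by rewrite -(cats0 (nseq i false)) val2_zeros /val2 big_ord0.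
by rewrite -(val2_ones p) subn1 /= addn0.
Qed.

Theorem mainTheorem5 (p q : nat) (hp : 1 <= p) (hpq : p < q) :
  S_ (q - p) (nseq (q - p) false ++ nseq p true) =
  \sum_(1 <= j < q.+1) minn (minn (j - 1) p) (minn (q - p) (q + 1 - j)) * 2 ^ (q - j).
Proof.
have [m Eq] : exists m, q = p + m by exists (q - p); lia.
have hm : 0 < m by lia.
subst q; rewrite addKn S_closed // -rhs_closed.
rewrite big_nat_rev big_add1 /= big_mkord; apply: eq_bigr => [[s hs]] _ /=.
rewrite /cc.
have -> : (1 + (p + m).+1 - s.+2) = p + m - s by lia.
have -> : p + m - s - 1 = p + m - 1 - s by lia.
have -> : p + m + 1 - (p + m - s) = s.+1 by lia.
by have -> : p + m - (p + m - s) = s by lia.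
Qed.
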